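(* Let $P\in N_1$ be a sum of $9$ monomials, not necessarily distinct (i.e. $P(1)=9$). Then $P$ has unique factorisation inside $N_1$: any two factorisations of $P$ into irreducible elements of $N_1$ coincide up to the order of the factors.
   Context: $N_1=\mathbb{Z}_{\ge0}[X]$ is the semiring of univariate polynomials with nonnegative integer coefficients. An element $Q\neq0,1$ of $N_1$ is irreducible if in every factorisation $Q=ST$ with $S,T\in N_1$ one of $S,T$ is $1$. *)

(* Defs.v *)
From mathcomp Require Import all_boot all_algebra.
Set Implicit Arguments. Unset Strict Implicit. Unset Printing Implicit Defensive.
Import GRing.Theory.
Local Open Scope ring_scope.

Notation N1 := {poly nat}.

Definition irreducibleN1 (Q : N1) : Prop :=
  Q <> 0 /\ Q <> 1 /\ forall S T : N1, Q = S * T -> S = 1 \/ T = 1.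

Definition irr_factorisation (P : N1) (s : seq N1) : Prop :=
  (forall q, q \in s -> irreducibleN1 q) /\ \prod_(q <- s) q = P.

(* Main.v *)
Require Import Defs.
From mathcomp Require Import all_boot all_algebra zify.
Import GRing.Theory.

Lemma n9 {x y m : nat} : (x * y * m = 9 -> 2<=x -> 2<=y -> 1<=m -> x = 3 /\ y = 3 /\ m = 1)%N.
Proof.
move=> e hx hy hm.
have hym : (2 <= y * m)%N by nia.
have : (x <= 4)%N by nia.
rewrite -mulnA in e.
case: x hx e => [|[|[|[|[|]]]]] //= _ e _.
- lia.
- have : (y <= 3)%N by nia.
  case: y hy e hym => [|[|[|[|]]]] //= _ e _ _; lia.
- lia.
Qed.

Definition LL (a a' b b' : nat) : seq nat :=
  [:: 0+0; 0+b; 0+b'; a+0; a+b; a+b'; a'+0; a'+b; a'+b'].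
Lemma cmin a a' b b' k : a <= a' -> b <= b' ->
  (2 <= count (fun x => x <= k) (LL a a' b b')) = (minn a b <= k).
Proof. move=> h1 h2; rewrite /LL /=; lia. Qed.
Lemma ctop a a' b b' k : a <= a' -> b <= b' ->
  (1 <= count (fun x => k <= x) (LL a a' b b')) = (k <= a' + b').
Proof. move=> h1 h2; rewrite /LL /=; lia. Qed.
Lemma csec a a' b b' k : a <= a' -> b <= b' ->
  (2 <= count (fun x => k <= x) (LL a a' b b')) = (k <= maxn (a'+b) (a+b')).
Proof. move=> h1 h2; rewrite /LL /=; lia. Qed.
Lemma fin a a' b b' c c' d d' : a <= a' -> b <= b' -> c <= c' -> d <= d' ->
 minn a b = minn c d -> a' + b' = c' + d' -> maxn (a'+b) (a+b') = maxn (c'+d) (c+d') ->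
 a+a'+b+b' = c+c'+d+d' ->
 3 * (a*a + a'*a' + b*b + b'*b') + 2 * ((a+a')*(b+b')) = 3 * (c*c + c'*c' + d*d + d'*d') + 2 * ((c+c')*(d+d')) ->
  (a = c /\ a' = c' /\ b = d /\ b' = d') \/ (a = d /\ a' = d' /\ b = c /\ b' = c').
Proof.
move=> h1 h2 h3 h4 em et es sm sq.
have [u eu] : exists u, a' = a + u by exists (a' - a); lia.
have [v ev] : exists v, b' = b + v by exists (b' - b); lia.
have [u' eu'] : exists u, c' = c + u by exists (c' - c); lia.
have [v' ev'] : exists v, d' = d + v by exists (d' - d); lia.
subst a' b' c' d'; clear h1 h2 h3 h4.
wlog ab : a b u v c d u' v' em et es sm sq / a <= b.
  move=> W; case: (leqP a b) => h; first exact: W.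
  have := W b a v u c d u' v' ltac:(lia) ltac:(lia) ltac:(lia) ltac:(lia) ltac:(nia) ltac:(lia); lia.
wlog cd : c d u' v' em et es sm sq / c <= d.
  move=> W; case: (leqP c d) => h; first exact: W.
  have := W d c v' u' ltac:(lia) ltac:(lia) ltac:(lia) ltac:(lia) ltac:(nia) ltac:(lia); lia.
have ac : a = c by lia.
have bd : b = d by lia.
subst c d.
case: (eqVneq u u') => [e|nu]; first by left; lia.
have e1 : u = v' by lia.
have e2 : v = u' by lia.
subst v' u'.
case: (eqVneq a b) => [e|nab]; first by right; lia.
exfalso.
have : (a < b) by lia.
case: (ltngtP u v) => huv hab; [|nia|lia].
nia.
Qed.

Lemma arith {a a' b b' c c' d d'} : a <= a' -> b <= b' -> c <= c' -> d <= d' ->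
  perm_eq (LL a a' b b') (LL c c' d d') ->
  (a = c /\ a' = c' /\ b = d /\ b' = d') \/ (a = d /\ a' = d' /\ b = c /\ b' = c').
Proof.
move=> h1 h2 h3 h4 pe.
have Em k : (minn a b <= k) = (minn c d <= k).
  by rewrite -(cmin _ _ _ _ k h1 h2) -(cmin _ _ _ _ k h3 h4) (permP pe).
have Et k : (k <= a' + b') = (k <= c' + d').
  by rewrite -(ctop _ _ _ _ k h1 h2) -(ctop _ _ _ _ k h3 h4) (permP pe).
have Es k : (k <= maxn (a'+b) (a+b')) = (k <= maxn (c'+d) (c+d')).
  by rewrite -(csec _ _ _ _ k h1 h2) -(csec _ _ _ _ k h3 h4) (permP pe).
have em : minn a b = minn c d.
  by apply/eqP; rewrite eqn_leq Em leqnn -Em leqnn.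
have et : a' + b' = c' + d'.
  by apply/eqP; rewrite eqn_leq -Et leqnn Et leqnn.
have es : maxn (a'+b) (a+b') = maxn (c'+d) (c+d').
  by apply/eqP; rewrite eqn_leq -Es leqnn Es leqnn.
have sm := perm_sumn pe.
have sq := perm_sumn (perm_map (fun x => x * x) pe).
move: sm sq; rewrite /LL /= => sm sq.
apply: fin => //; nia.
Qed.



Local Open Scope ring_scope.

Definition cf (p : N1) (j : nat) := p`_j.

Lemma coef_le1 (p : N1) (i : nat) : let c := p`_i in (c <= p.[1%N])%N.
Proof.
rewrite /=.
case: (ltnP i (size p)) => hi; last by rewrite nth_default.
rewrite horner_coef (bigD1 (Ordinal hi)) //= expr1n mulr1.
by rewrite natrE leq_addr.
Qed.

Lemma nf {n} (p : N1) : p.[1%N] = n -> exists L, size L = n /\ p = \sum_(e <- L) 'X^e.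
Proof.
elim: n p => [|n IH] p hp.
  exists [::]; split => //; rewrite big_nil.
  apply/polyP => i; rewrite coef0.
  by have := coef_le1 p i; rewrite hp; case: (p`_i).
have pn0 : p != 0 by apply/eqP => p0; rewrite p0 horner0 in hp.
set i := (size p).-1.
have hi : p`_i != 0 by have := pn0; rewrite -lead_coef_eq0.
pose q : N1 := \poly_(j < size p) (subn (cf p j) (j == i)).
have E : p = q + 'X^i.
  apply/polyP => j; rewrite coefD coef_poly coefXn natn /cf.
  case: (ltnP j (size p)) => hj.
    case: (eqVneq j i) => [->|_] /=; rewrite natrE.
      by move: hi; rewrite /cf; case: (p`_i) => // m _; rewrite subn1 natrE addn1.
    by rewrite subn0 addr0.
  have ip : (i < size p)%N by rewrite /i prednK // lt0n size_poly_eq0.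
  have -> : (j == i) = false by apply/negbTE; apply/eqP => eji; move: ip hj; rewrite eji; lia.
  by rewrite !nth_default.
have hq : q.[1%N] = n.
  by move: hp; rewrite {1}E hornerD hornerXn expr1n natrE; lia.
have [L [sL eL]] := IH q hq.
exists (i :: L); split; first by rewrite /= sL.
by rewrite big_cons E eL addrC.
Qed.

Lemma coef_sumX (L : seq nat) k :
  (\sum_(e <- L) 'X^e : N1)`_k = count_mem k L.
Proof.
elim: L => [|e L IH]; first by rewrite big_nil coef0.
by rewrite big_cons coefD IH coefXn natn /= eq_sym.
Qed.

Lemma permX (L1 L2 : seq nat) :
  (\sum_(e <- L1) 'X^e : N1) = \sum_(e <- L2) 'X^e -> perm_eq L1 L2.
Proof.
move=> E; apply/allP => x _ /=; apply/eqP.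
by rewrite -!coef_sumX E.
Qed.

Lemma nf3 {p : N1} : p.[1%N] = 3%N -> p`_0 != 0 ->
  exists a a', (a <= a')%N /\ p = 'X^0 + 'X^a + 'X^a'.
Proof.
move=> h3 h0; have [L [sL eL]] := nf p h3.
have eS : p = \sum_(e <- sort leq L) 'X^e by rewrite eL (perm_big _ (permEl (perm_sort leq L))).
have m0 : 0%N \in sort leq L.
  by rewrite mem_sort -has_pred1 has_count lt0n -coef_sumX -eL.
have so := sort_sorted leq_total L.
move: (size_sort leq L) m0 so eS; rewrite sL.
case: (sort leq L) => [|x [|y [|z [|w l]]]] //= _.
rewrite !inE => m0 /and3P[hxy hyz _] eS.
have x0 : x = 0%N by move: m0 hxy hyz; case/or3P => /eqP <-; lia.
exists y, z; split => //.
by rewrite eS !big_cons big_nil addr0 x0 addrA.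
Qed.


Lemma prodX (a a' b b' : nat) :
  (('X^0 + 'X^a + 'X^a') * ('X^0 + 'X^b + 'X^b') : N1) = \sum_(e <- LL a a' b b') 'X^e.
Proof.
rewrite /LL !big_cons big_nil addr0 !mulrDl !mulrDr -!exprD !addrA.
done.
Qed.

Lemma val1 {p : N1} : p.[1%N] = 1%N -> exists e, p = 'X^e.
Proof.
move=> h; have [L [sL eL]] := nf p h.
case: L sL eL => [|e [|]] //= _ ->; exists e.
by rewrite big_cons big_nil addr0.
Qed.

Lemma val0 {p : N1} : p.[1%N] = 0%N -> p = 0.
Proof.
move=> h; have [L [sL eL]] := nf p h.
by case: L sL eL => //= _ ->; rewrite big_nil.
Qed.

Lemma X_neq1 : ('X : N1) != 1.
Proof. by apply/negP => /eqP e; have := congr1 (fun p : N1 => size p) e; rewrite size_polyX size_poly1. Qed.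

Lemma irr_coef0 {q : N1} : irreducibleN1 q -> q`_0 = 0 -> q = 'X.
Proof.
move=> [q0 [q1 hq]] c0.
have [L [_ eL]] := nf q (erefl _).
have nL : 0%N \notin L.
  by rewrite -has_pred1 has_count -coef_sumX -eL c0.
have E : q = 'X * \sum_(e <- L) 'X^(e.-1).
  rewrite eL big_distrr /=; apply: eq_big_seq => e eIn.
  rewrite -exprS prednK // lt0n; apply/eqP => e0; move: eIn nL; rewrite e0 => ->.
  done.
case: (hq _ _ E) => h; first by move: X_neq1; rewrite h eqxx.
by rewrite E h mulr1.
Qed.

Lemma irr_val1 {q : N1} : irreducibleN1 q -> q.[1%N] = 1%N -> q = 'X.
Proof.
move=> hq h; have [[|e] eq] := val1 h.
  by case: hq => _ [+ _]; rewrite eq expr0.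
by apply: irr_coef0 => //; rewrite eq coefXn.
Qed.

Lemma irr_nonX {q : N1} : irreducibleN1 q -> q != 'X -> q`_0 != 0 /\ (2 <= q.[1%N])%N.
Proof.
move=> hq nX; split.
  by apply/eqP => c0; rewrite (irr_coef0 hq c0) eqxx in nX.
have h0 : q.[1%N] != 0%N by apply/eqP => /val0; case: hq.
have h1 : q.[1%N] != 1%N by apply/eqP => /(irr_val1 hq) e; rewrite e eqxx in nX.
lia.
Qed.

Lemma filter1 (T : eqType) (x : T) (s : seq T) : filter (pred1 x) s = nseq (count_mem x s) x.
Proof. by elim: s => //= y s ->; case: eqP => [->|]. Qed.

Lemma prod_nseq n (x : N1) : \prod_(q <- nseq n x) q = x ^+ n.
Proof. by elim: n => [|n IH]; rewrite ?big_nil ?expr0 //= big_cons IH exprS. Qed.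

Lemma decomp {P s} : irr_factorisation P s ->
  P = 'X^(count_mem 'X s) * \prod_(q <- [seq q <- s | q != 'X]) q /\
  perm_eq s (nseq (count_mem 'X s) 'X ++ [seq q <- s | q != 'X]).
Proof.
move=> [_ hp]; split.
  rewrite -hp (bigID (pred1 'X)) /= -big_filter filter1 prod_nseq big_filter.
  done.
rewrite perm_sym -filter1; exact: permEl (perm_filterC _ _).
Qed.

Lemma shiftX {k k' : nat} {R R' : N1} : R`_0 != 0 -> R'`_0 != 0 ->
  'X^k * R = 'X^k' * R' -> k = k' /\ R = R'.
Proof.
move=> h h' e.
have kk : k = k'.
  apply/eqP; rewrite eqn_leq; apply/andP; split; rewrite leqNgt; apply/negP => lt.
    have := congr1 (fun p : N1 => p`_k') e; rewrite /= !coefXnM ltnn subnn lt /=.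
    by move=> e0; rewrite -e0 eqxx in h'.
  have := congr1 (fun p : N1 => p`_k) e; rewrite /= !coefXnM ltnn subnn lt /=.
  by move=> e0; rewrite e0 eqxx in h.
subst k'; split => //; apply/polyP => i.
have := congr1 (fun p : N1 => p`_(i + k)) e.
by rewrite /= !coefXnM ltnNge leq_addl /= addnK.
Qed.

Lemma prod_c0 {r : seq N1} : (forall q, q \in r -> q`_0 != 0) -> (\prod_(q <- r) q)`_0 != 0.
Proof.
elim: r => [|x r IH] h; first by rewrite big_nil coef1.
rewrite big_cons coef0M natrE muln_eq0 negb_or h ?mem_head //=.
by apply: IH => q qin; apply: h; rewrite inE qin orbT.
Qed.

Lemma prod_val {l : seq N1} : (forall q, q \in l -> (2 <= q.[1%N])%N) ->
  (1 <= (\prod_(q <- l) q).[1%N])%N /\ ((\prod_(q <- l) q).[1%N] = 1%N -> l = [::]).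
Proof.
elim: l => [|x l IH] h; first by rewrite big_nil hornerC.
have hx := h x (mem_head _ _).
have hl : forall q, q \in l -> (2 <= q.[1%N])%N.
  by move=> q qin; apply: h; rewrite inE qin orbT.
have [IH1 _] := IH hl.
rewrite big_cons hornerM natrE.
move: IH1; set m := (\prod_(q <- l) q).[1%N] => IH1.
move: hx; set y := x.[1%N] => hx.
split; first by rewrite muln_gt0 IH1 andbT; lia.
move=> e; exfalso; move/eqP: e; rewrite muln_eq1; lia.
Qed.

Lemma shape {r : seq N1} : (forall q, q \in r -> (2 <= q.[1%N])%N) ->
  (\prod_(q <- r) q).[1%N] = 9%N ->
  (exists R, r = [:: R]) \/ (exists A B, r = [:: A; B] /\ A.[1%N] = 3%N /\ B.[1%N] = 3%N).
Proof.
case: r => [|x [|y l]] h.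
- by rewrite big_nil hornerC.
- by move=> _; left; exists x.
- move=> e; right; exists x, y.
  have hx := h x (mem_head _ _).
  have hy : (2 <= y.[1%N])%N by apply: h; rewrite !inE eqxx orbT.
  have hl : forall q, q \in l -> (2 <= q.[1%N])%N.
    by move=> q qin; apply: h; rewrite !inE qin !orbT.
  have [pl1 pl2] := prod_val hl.
  move: e; rewrite !big_cons !hornerM natrE mulnA => e.
  have [e1 [e2 e3]] := n9 e hx hy pl1.
  by rewrite (pl2 e3).
Qed.

Lemma main33 {A B C D : N1} : A.[1%N] = 3%N -> B.[1%N] = 3%N -> C.[1%N] = 3%N -> D.[1%N] = 3%N ->
  A`_0 != 0 -> B`_0 != 0 -> C`_0 != 0 -> D`_0 != 0 -> A * B = C * D ->
  (A = C /\ B = D) \/ (A = D /\ B = C).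
Proof.
move=> vA vB vC vD cA cB cC cD.
have [a [a' [ha ->]]] := nf3 vA cA.
have [b [b' [hb ->]]] := nf3 vB cB.
have [c [c' [hc ->]]] := nf3 vC cC.
have [d [d' [hd ->]]] := nf3 vD cD.
rewrite !prodX => /permX pe.
case: (arith ha hb hc hd pe) => [[-> [-> [-> ->]]]|[-> [-> [-> ->]]]]; by [left|right].
Qed.

Theorem mainTheorem11 (P : {poly nat}) (hP : P.[1%N] = 9%N) :
  forall s t : seq {poly nat},
    irr_factorisation P s -> irr_factorisation P t -> perm_eq s t.
Proof.
move=> s t hs ht.
have [Ps pes] := decomp hs; have [Pt pet] := decomp ht.
have props : forall u, irr_factorisation P u -> forall q, q \in [seq q <- u | q != 'X] ->
    irreducibleN1 q /\ q`_0 != 0 /\ (2 <= q.[1%N])%N.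
  move=> u [hu _] q; rewrite mem_filter => /andP[nX qin].
  have hq := hu q qin; have [? ?] := irr_nonX hq nX; by [].
have c0 : forall u, irr_factorisation P u -> (\prod_(q <- [seq q <- u | q != 'X]) q)`_0 != 0.
  by move=> u hu; apply: prod_c0 => q /(props u hu) [_ []].
have [kk RR] := shiftX (c0 s hs) (c0 t ht) (etrans (esym Ps) Pt).
have v9 : forall u, irr_factorisation P u ->
    (\prod_(q <- [seq q <- u | q != 'X]) q).[1%N] = 9%N.
  move=> u hu; have [Pu _] := decomp hu.
  by move: hP; rewrite Pu hornerM hornerXn expr1n mul1r.
have sh : forall u, irr_factorisation P u ->
   (exists R, [seq q <- u | q != 'X] = [:: R]) \/
   (exists A B, [seq q <- u | q != 'X] = [:: A; B] /\ A.[1%N] = 3%N /\ B.[1%N] = 3%N).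
  move=> u hu; apply: shape; last exact: v9 u hu.
  by move=> q qin; exact: (proj2 (proj2 (props u hu q qin))).
apply: perm_trans pes _; rewrite perm_sym; apply: perm_trans pet _.
rewrite kk perm_cat2l perm_sym.
move: RR (props s hs) (props t ht) (v9 s hs) (v9 t ht).
case: (sh s hs) => [[R ->]|[A [B [-> [vA vB]]]]];
case: (sh t ht) => [[R' ->]|[C [D [-> [vC vD]]]]];
rewrite !big_cons !big_nil ?mulr1 => E pS pT _ _.
- by rewrite E.
- have [hR _] := pS R (mem_head _ _).
  case: hR => _ [_ /(_ _ _ E)] [] e; [move: vC|move: vD]; by rewrite e hornerC.
- have [hR _] := pT R' (mem_head _ _).
  case: hR => _ [_ /(_ _ _ (esym E))] [] e; [move: vA|move: vB]; by rewrite e hornerC.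
- have [hA [cA _]] := pS A (mem_head _ _).
  have [hB [cB _]] : irreducibleN1 B /\ B`_0 != 0 /\ (2 <= B.[1%N])%N by apply: pS; rewrite !inE eqxx orbT.
  have [hC [cC _]] := pT C (mem_head _ _).
  have [hD [cD _]] : irreducibleN1 D /\ D`_0 != 0 /\ (2 <= D.[1%N])%N by apply: pT; rewrite !inE eqxx orbT.
  case: (main33 vA vB vC vD cA cB cC cD E) => [[-> ->]|[-> ->]] //.
  by apply/permP => p /=; lia.
Qed.
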